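(* Let $L$ be a commutative incline with the arithmetic geometric property. Then for every $k\ge 1$ and all $x_1,\dots,x_k\in L$, $$\bigoplus_{i=1}^{k} x_i^{\otimes 2}=\Big(\bigoplus_{i=1}^{k} x_i\Big)^{\otimes 2},$$ where $x^{\otimes 2}=x\otimes x$.
   Context: An incline is a nonempty set $L$ with two binary operations $\oplus,\otimes$ such that $(L,\oplus)$ is a semilattice ($\oplus$ associative, commutative, idempotent), $(L,\otimes)$ is a semigroup, $x\otimes(y\oplus z)=(x\otimes y)\oplus(x\otimes z)$ and $x\oplus(x\otimes y)=x$ for all $x,y,z\in L$. The relation $x\le y\iff x\oplus y=y$ is a partial order with $x\oplus y$ the least upper bound. $L$ is commutative if $\otimes$ is commutative. $L$ has the arithmetic geometric property (AG-property) if $x\otimes y\le (x\otimes x)\oplus(y\otimes y)$ for all $x,y\in L$. *)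

(* Defs.v *)
From Stdlib Require Import List.

Record is_incline (L : Type) (add mul : L -> L -> L) : Prop := {
  inc_add_assoc : forall x y z, add x (add y z) = add (add x y) z;
  inc_add_comm : forall x y, add x y = add y x;
  inc_add_idem : forall x, add x x = x;
  inc_mul_assoc : forall x y z, mul x (mul y z) = mul (mul x y) z;
  inc_distr_l : forall x y z, mul x (add y z) = add (mul x y) (mul x z);
  inc_absorb : forall x y, add x (mul x y) = x
}.

Definition inc_le {L : Type} (add : L -> L -> L) (x y : L) : Prop := add x y = y.

Definition is_commutative {L : Type} (mul : L -> L -> L) : Prop :=
  forall x y, mul x y = mul y x.

Definition AG_property {L : Type} (add mul : L -> L -> L) : Prop :=
  forall x y, inc_le add (mul x y) (add (mul x x) (mul y y)).

Fixpoint bigadd {L : Type} (add : L -> L -> L) (f : nat -> L) (k : nat) : L :=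
  match k with
  | 0 => f 0 (* unused: only k >= 1 is meaningful *)
  | 1 => f 1
  | S k' => add (bigadd add f k') (f (S k'))
  end.

(* Main.v *)
Require Import Defs.

Lemma aux_ac (L : Type) (add mul : L -> L -> L) (HL : is_incline L add mul) :
  forall a b c, add (add a c) (add b c) = add (add a b) c.
Proof.
  intros a b c.
  rewrite <- (inc_add_assoc _ _ _ HL a c).
  rewrite (inc_add_comm _ _ _ HL b c).
  rewrite (inc_add_assoc _ _ _ HL c c b), (inc_add_idem _ _ _ HL c).
  rewrite (inc_add_comm _ _ _ HL c b).
  apply (inc_add_assoc _ _ _ HL).
Qed.

Lemma le_add (L : Type) (add mul : L -> L -> L) (HL : is_incline L add mul) :
  forall a b c d, inc_le add a b -> inc_le add c d -> inc_le add (add a c) (add b d).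
Proof.
  unfold inc_le. intros a b c d Hab Hcd.
  rewrite <- (inc_add_assoc _ _ _ HL a c).
  rewrite (inc_add_assoc _ _ _ HL c b d), (inc_add_comm _ _ _ HL c b).
  rewrite <- (inc_add_assoc _ _ _ HL b c d), Hcd.
  rewrite (inc_add_assoc _ _ _ HL a b d), Hab. reflexivity.
Qed.

Lemma key (L : Type) (add mul : L -> L -> L)
  (HL : is_incline L add mul) (Hc : is_commutative mul) (HAG : AG_property add mul)
  (x : nat -> L) : forall k y, 1 <= k ->
  inc_le add (mul (bigadd add x k) y)
    (add (bigadd add (fun i => mul (x i) (x i)) k) (mul y y)).
Proof.
  induction k as [|k IH]; intros y hk.
  - inversion hk.
  - destruct k as [|n].
    + simpl. apply HAG.
    + change (bigadd add x (S (S n))) with (add (bigadd add x (S n)) (x (S (S n)))).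
      change (bigadd add (fun i => mul (x i) (x i)) (S (S n))) with
        (add (bigadd add (fun i => mul (x i) (x i)) (S n)) (mul (x (S (S n))) (x (S (S n))))).
      rewrite (Hc _ y), (inc_distr_l _ _ _ HL), (Hc y), (Hc y).
      rewrite <- (aux_ac _ _ _ HL).
      apply (le_add _ _ _ HL).
      * apply IH. apply le_n_S, le_0_n.
      * apply HAG.
Qed.

Theorem mainTheorem2 (L : Type) (add mul : L -> L -> L)
  (HL : is_incline L add mul) (Hc : is_commutative mul) (HAG : AG_property add mul)
  (k : nat) (hk : 1 <= k) (x : nat -> L) :
  bigadd add (fun i => mul (x i) (x i)) k = mul (bigadd add x k) (bigadd add x k).
Proof.
  induction k as [|k IH].
  - inversion hk.
  - destruct k as [|n].
    + reflexivity.
    + change (bigadd add x (S (S n))) with (add (bigadd add x (S n)) (x (S (S n)))).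
      change (bigadd add (fun i => mul (x i) (x i)) (S (S n))) with
        (add (bigadd add (fun i => mul (x i) (x i)) (S n)) (mul (x (S (S n))) (x (S (S n))))).
      set (S0 := bigadd add x (S n)) in *.
      set (Q := bigadd add (fun i => mul (x i) (x i)) (S n)) in *.
      set (y := x (S (S n))).
      rewrite (inc_distr_l _ _ _ HL).
      rewrite (Hc (add S0 y) S0), (Hc (add S0 y) y), !(inc_distr_l _ _ _ HL).
      rewrite <- IH by (apply le_n_S, le_0_n).
      rewrite (Hc S0 y), (inc_add_comm _ _ _ HL (mul y S0) (mul y y)).
      rewrite (aux_ac _ _ mul HL).
      rewrite (Hc y S0).
      pose proof (key L add mul HL Hc HAG x (S n) y ltac:(apply le_n_S, le_0_n)) as Hk.
      unfold inc_le in Hk. fold S0 Q in Hk.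
      rewrite (inc_add_comm _ _ _ HL (add Q (mul y y)) (mul S0 y)). rewrite Hk. reflexivity.
Qed.
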